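(* Let $(\mathcal{H}, p_0, \mathcal{Z}, T, \mathcal{Y}, O)$ be a learning POMDP, let $h^* \in \mathcal{H}$ be a target hypothesis, let $0<\lambda\le 1$ be a teaching performance and let $t^*\in\mathbb{N}_{\ge 1}$ be a pre-set number of trials. Suppose there exist a polynomial $B\in\mathcal{R}[t,b]$ of degree $d$, a sum-of-squares polynomial $p^f\in\Sigma[b]$, and constants $s_1,s_2>0$ such that (i) $B(t^*,b)+p^f(b)\big(b(h^* )-\lambda\big)-s_1\in\Sigma[b]$; (ii) $-B(0,p_0)-s_2>0$; (iii) for all $t\in\{1,\dots,t^*\}$, $y\in\mathcal{Y}$, $z\in\mathcal{Z}$: $$-R_z(b,y)^d\Big(B\Big(t,\tfrac{S_z(b,y)}{R_z(b,y)}\Big)-B(t-1,b)\Big)\in\Sigma[t,b].$$ Then there exists no solution of the belief dynamics $b_t=f_{z}(b_{t-1},y_t)$ (with arbitrary examples $z\in\mathcal{Z}$ and observations $y_t\in\mathcal{Y}$) with $b_0=p_0$ and $b_{t^*}\in\mathcal{B}_f$, where $\mathcal{B}_f=\{b\in\mathcal{B}: b(h^* )<\lambda\}$; hence the teaching performance is satisfied, i.e. $b_{t^*}(h^* )\ge\lambda$ along all such trajectories.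
   Context: A learning POMDP is a tuple $(\mathcal{H}, p_0, \mathcal{Z}, T, \mathcal{Y}, O)$ where $\mathcal{H}$ is a finite set of hypotheses, $\mathcal{Z}$ a finite set of examples (actions), $\mathcal{Y}$ a finite set of observations, $p_0$ an initial distribution on $\mathcal{H}$, $T(h,z,h')\in[0,1]$ transition probabilities and $O(y\mid h',z)\in[0,1]$ observation probabilities. $\mathcal{B}$ is the unit simplex of beliefs on $\mathcal{H}$; $b=(b(h))_{h\in\mathcal{H}}$ are treated as real variables. The belief update $f_z(b,y)$ is the rational map with components $f_z^{h'}(b,y)=S_z^{h'}(b,y)/R_z(b,y)$, where $S_z^{h'}(b,y)=O(y\mid h',z)\sum_{h\in\mathcal{H}}T(h,z,h')b(h)$ and $R_z(b,y)=\sum_{h''\in\mathcal{H}}O(y\mid h'',z)\sum_{h\in\mathcal{H}}T(h,z,h'')b(h)$; $S_z/R_z$ denotes the vector with these components. $\mathcal{R}[x]$ denotes real polynomials in the variables $x$, and $\Sigma[x]\subset\mathcal{R}[x]$ the polynomials that are sums of squares of polynomials. *)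

(* Defs.v *)
From HB Require Import structures.
From mathcomp Require Import all_boot all_order all_algebra.
From mathcomp Require Import mpoly.
Set Implicit Arguments. Unset Strict Implicit. Unset Printing Implicit Defensive.
Import Order.TTheory GRing.Theory Num.Theory.
Local Open Scope ring_scope.

(* Polynomials in b live in {mpoly R[n]} (variable 'X_h stands for b(h));
   polynomials in (t,b) live in {mpoly R[n.+1]}, variable ord0 is t and
   variable (lift ord0 h) is b(h). *)

Section LearningPOMDP.
Variables (R : realFieldType) (n : nat) (Z Y : finType).

Definition is_sos k (p : {mpoly R[k]}) : Prop :=
  exists qs : seq {mpoly R[k]}, p = \sum_(q <- qs) q ^+ 2.

Definition in_simplex (b : 'I_n -> R) : Prop :=
  (forall h, 0 <= b h) /\ \sum_(h < n) b h = 1.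

Variables (T : 'I_n -> Z -> 'I_n -> R) (O : Y -> 'I_n -> Z -> R).

Definition Spoly (z : Z) (y : Y) (h' : 'I_n) : {mpoly R[n]} :=
  (O y h' z)%:MP * \sum_(h < n) (T h z h')%:MP * 'X_h.
Definition Rpoly (z : Z) (y : Y) : {mpoly R[n]} :=
  \sum_(h'' < n) Spoly z y h''.

Definition Sval (z : Z) (y : Y) (b : 'I_n -> R) (h' : 'I_n) : R :=
  O y h' z * \sum_(h < n) T h z h' * b h.
Definition Rval (z : Z) (y : Y) (b : 'I_n -> R) : R :=
  \sum_(h'' < n) Sval z y b h''.
Definition belief_update (z : Z) (b : 'I_n -> R) (y : Y) : 'I_n -> R :=
  fun h' => Sval z y b h' / Rval z y b.

Definition subst_t_var (c : R) (i : 'I_n.+1) : {mpoly R[n]} :=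
  match unlift ord0 i with Some j => 'X_j | None => c%:MP end.
Definition subst_t (c : R) (B : {mpoly R[n.+1]}) : {mpoly R[n]} :=
  B \mPo [tuple subst_t_var c i | i < n.+1].

Definition eval_tb (B : {mpoly R[n.+1]}) (c : R) (v : 'I_n -> R) : R :=
  B.@[fun i : 'I_n.+1 => match unlift ord0 i with Some j => v j | None => c end].

(* R_z(b,y)^d * B(c, S_z(b,y)/R_z(b,y)), written as the polynomial obtained
   by clearing denominators monomial by monomial (valid when d >= deg B) *)
Definition cleared_comp (d : nat) (B : {mpoly R[n.+1]}) (c : R) (z : Z) (y : Y)
  : {mpoly R[n]} :=
  \sum_(m <- msupp B)
     (B@_m * c ^+ (m ord0))%:MP
     * (\prod_(h < n) Spoly z y h ^+ (m (lift ord0 h)))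
     * Rpoly z y ^+ (d - \sum_(h < n) m (lift ord0 h))%N.

End LearningPOMDP.

(* Main.v *)
Require Import Defs.
From HB Require Import structures.
From mathcomp Require Import all_boot all_order all_algebra.
From mathcomp Require Import mpoly.
From mathcomp Require Import zify ring lra.
Import Order.TTheory GRing.Theory Num.Theory.
Local Open Scope ring_scope.

Section Plain.
Context (R : comNzRingType) (k : nat) (v : 'I_k -> R).
Lemma mev_sum (I : Type) (r : seq I) (P : pred I) (F : I -> {mpoly R[k]}) :
  (\sum_(i <- r | P i) F i).@[v] = \sum_(i <- r | P i) (F i).@[v].
Proof. exact: (rmorph_sum (meval v)). Qed.
Lemma mev_prod (I : Type) (r : seq I) (P : pred I) (F : I -> {mpoly R[k]}) :
  (\prod_(i <- r | P i) F i).@[v] = \prod_(i <- r | P i) (F i).@[v].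
Proof. exact: (rmorph_prod (meval v)). Qed.
Lemma mev_exp (p : {mpoly R[k]}) e : (p ^+ e).@[v] = p.@[v] ^+ e.
Proof. exact: (rmorphXn (meval v)). Qed.
End Plain.

Lemma sos_ge0 (R : realFieldType) k (p : {mpoly R[k]}) v : is_sos p -> 0 <= p.@[v].
Proof.
move=> [qs ->]; rewrite mev_sum /=; apply: sumr_ge0 => q _.
by rewrite mev_exp sqr_ge0.
Qed.

Lemma subst_t_eval (R : realFieldType) n (c : R) (B : {mpoly R[n.+1]}) v :
  (subst_t c B).@[v] = eval_tb B c v.
Proof.
rewrite /subst_t comp_mpoly_meval /eval_tb; apply: meval_eq => i.
rewrite tnth_mktuple /subst_t_var; case: unlift => [j|].
  by rewrite mevalXU. by rewrite mevalC.
Qed.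

Lemma Spoly_eval (R : realFieldType) n (Z Y : finType) T O (z : Z) (y : Y) h v :
  (@Spoly R n Z Y T O z y h).@[v] = Sval T O z y v h.
Proof.
rewrite /Spoly /Sval mevalM mevalC mev_sum; congr (_ * _).
by apply: eq_bigr => i _; rewrite mevalM mevalC mevalXU.
Qed.

Lemma Rpoly_eval (R : realFieldType) n (Z Y : finType) T O (z : Z) (y : Y) v :
  (@Rpoly R n Z Y T O z y).@[v] = Rval T O z y v.
Proof.
by rewrite /Rpoly /Rval mev_sum; apply: eq_bigr => i _; apply: Spoly_eval.
Qed.

Lemma cleared_eval (R : realFieldType) n (Z Y : finType) T O d (B : {mpoly R[n.+1]}) c
  (z : Z) (y : Y) (v : 'I_n -> R) :
  (msize B).-1 = d -> Rval T O z y v != 0 ->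
  (cleared_comp T O d B c z y).@[v]
  = Rval T O z y v ^+ d * eval_tb B c (belief_update T O z v y).
Proof.
move=> hd hR.
rewrite /cleared_comp /eval_tb [X in _ = _ * X]mevalE mev_sum mulr_sumr /=.
apply: eq_big_seq => m hm.
rewrite !mevalM mev_exp mev_prod mevalC Rpoly_eval.
rewrite big_ord_recl unlift_none.
under eq_bigr => h _ do rewrite mev_exp Spoly_eval.
under [X in _ = _ * (_ * (_ * X))]eq_bigr => h _ do rewrite liftK /belief_update expr_div_n.
rewrite prodf_div prodrXr.
set K := (\sum_(i < n) m (lift ord0 i))%N.
have hK : (K <= d)%N.
  move: (msize_mdeg_lt hm); rewrite mdegE big_ord_recl -hd -/K; lia.
rewrite -{2}(subnK hK) exprD.
have hRK : Rval T O z y v ^+ K != 0 by rewrite expf_neq0.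
by field.
Qed.


Theorem corollary1 (R : realFieldType) (n : nat) (Z Y : finType)
  (p0 : 'I_n -> R) (T : 'I_n -> Z -> 'I_n -> R) (O : Y -> 'I_n -> Z -> R)
  (hstar : 'I_n) (lambda : R) (tstar : nat)
  (B : {mpoly R[n.+1]}) (d : nat) (pf : {mpoly R[n]}) (s1 s2 : R) :
  in_simplex p0 ->
  (forall h z h', 0 <= T h z h' <= 1) ->
  (forall y h' z, 0 <= O y h' z <= 1) ->
  0 < lambda <= 1 ->
  (1 <= tstar)%N ->
  (msize B).-1 = d ->
  is_sos pf ->
  0 < s1 -> 0 < s2 ->
  is_sos (subst_t tstar%:R B + pf * ('X_hstar - lambda%:MP) - s1%:MP) ->
  - eval_tb B 0 p0 - s2 > 0 ->
  (forall (t : nat) (y : Y) (z : Z), (1 <= t <= tstar)%N ->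
     is_sos (- (cleared_comp T O d B t%:R z y
                - Rpoly T O z y ^+ d * subst_t t.-1%:R B))) ->
  forall (zs : nat -> Z) (ys : nat -> Y) (b : nat -> 'I_n -> R),
    b 0%N = p0 ->
    (forall t, (1 <= t <= tstar)%N -> b t = belief_update T O (zs t) (b t.-1) (ys t)) ->
    ~ (in_simplex (b tstar) /\ b tstar hstar < lambda).
Proof.
move=> hp0 hT hO hlam ht hd hpf hs1 hs2 hi hii hiii zs ys b hb0 hbt [hsim hlt].
pose V t := eval_tb B t%:R (b t).
have Sge : forall z y w h', (forall h, 0 <= w h) -> 0 <= Sval T O z y w h'.
  move=> z y w h' hw; rewrite /Sval mulr_ge0 //; first by case/andP: (hO y h' z).
  apply: sumr_ge0 => h _; rewrite mulr_ge0 //; by case/andP: (hT h z h').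
have Rge : forall z y w, (forall h, 0 <= w h) -> 0 <= Rval T O z y w.
  by move=> z y w hw; apply: sumr_ge0 => h _; apply: Sge.
have key : forall t, (t <= tstar)%N ->
    (forall h, b t h = 0) \/ (V t <= V 0%N /\ forall h, 0 <= b t h).
  elim=> [_|t IH ht1].
    by right; split=> //; rewrite hb0; case: hp0.
  have ht' : (t <= tstar)%N by apply: ltnW.
  have hbt1 : b t.+1 = belief_update T O (zs t.+1) (b t) (ys t.+1).
    by apply: (hbt t.+1); rewrite ht1.
  case: (IH ht') => [hz|[hV hnn]].
    left => h; rewrite hbt1 /belief_update.
    have -> : Sval T O (zs t.+1) (ys t.+1) (b t) h = 0.
      by rewrite /Sval big1 ?mulr0 // => i _; rewrite hz mulr0.
    by rewrite mul0r.
  have r0 := Rge (zs t.+1) (ys t.+1) (b t) hnn.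
  case: (eqVneq (Rval T O (zs t.+1) (ys t.+1) (b t)) 0) => hr0.
    by left => h; rewrite hbt1 /belief_update hr0 invr0 mulr0.
  right; split; last first.
    by move=> h; rewrite hbt1 /belief_update divr_ge0 // Sge.
  have hrp : 0 < Rval T O (zs t.+1) (ys t.+1) (b t) by rewrite lt_def hr0 r0.
  have hs := sos_ge0 _ _ _ (b t) (hiii t.+1 (ys t.+1) (zs t.+1) (ltac:(by rewrite ht1))).
  rewrite mevalN mevalB mevalM mev_exp Rpoly_eval subst_t_eval cleared_eval //= in hs.
  rewrite -hbt1 in hs.
  have hrd : 0 < Rval T O (zs t.+1) (ys t.+1) (b t) ^+ d by rewrite exprn_gt0.
  have : Rval T O (zs t.+1) (ys t.+1) (b t) ^+ d * (V t.+1 - V t) <= 0.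
    rewrite mulrBr; rewrite /V; lra.
  rewrite pmulr_rle0 // subr_le0 => hle.
  exact: le_trans hle hV.
case: (key tstar (leqnn _)) => [hz|[hV _]].
  move: hsim => [_]; rewrite big1 //; move/eqP; by rewrite eq_sym oner_eq0.
have := sos_ge0 _ _ _ (b tstar) hi.
rewrite mevalB mevalD mevalM mevalB mevalXU !mevalC subst_t_eval.
have hpf0 := sos_ge0 _ _ _ (b tstar) hpf.
have hneg : pf.@[b tstar] * (b tstar hstar - lambda) <= 0.
  by apply: mulr_ge0_le0 => //; rewrite subr_le0 ltW.
move: hV; rewrite /V hb0 mulr0n => hV.
lra.
Qed.
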